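(* Let $X$ be a CAT(0) Euclidean polygonal complex, let $x_1,x_2,x_3,x_4\in X$, and for $1\le i\le 4$ let $W_i$ be the full triangle spanned by the three points $\{x_1,x_2,x_3,x_4\}\setminus\{x_i\}$. If $p\in W_i$ for some $i$, then there exists $j\neq i$ with $p\in W_j$.
   Context: A CAT(0) Euclidean polygonal complex is a 2-dimensional polygonal complex whose cells are convex Euclidean polygons, with its induced length metric, assumed CAT(0). $\overline{ab}$ denotes the unique geodesic between $a,b$; $\triangle(x,y,z)=\overline{xy}\cup\overline{yz}\cup\overline{zx}$. The full triangle $\blacktriangle(x,y,z)$ is the union of $\triangle(x,y,z)$ with the set of points $p\in X\setminus\triangle(x,y,z)$ for which $\triangle(x,y,z)$ is not null-homotopic in $X\setminus\{p\}$. *)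

(* Defs.v *)
From Stdlib Require Import Reals List.
Open Scope R_scope.

Definition pt := (R * R)%type.

Definition edist (u v : pt) : R :=
  sqrt ((fst u - fst v)^2 + (snd u - snd v)^2).

Fixpoint conv (L : list pt) : pt -> Prop :=
  match L with
  | nil => fun _ => False
  | v :: nil => fun q => q = v
  | v :: L' => fun q => exists t w, 0 <= t <= 1 /\ conv L' w /\
                 q = (t * fst v + (1 - t) * fst w, t * snd v + (1 - t) * snd w)
  end.

Definition convex_polygon (P : pt -> Prop) : Prop :=
  exists L : list pt, L <> nil /\ forall q, P q <-> conv L q.

Definition face (P F : pt -> Prop) : Prop :=
  (forall q, F q <-> P q) \/
  exists a b c : R, (a <> 0 \/ b <> 0) /\
    (forall q, P q -> a * fst q + b * snd q <= c) /\
    (forall q, F q <-> (P q /\ a * fst q + b * snd q = c)).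

Definition carrier (P : pt -> Prop) (x : pt) : pt -> Prop :=
  fun y => P y /\ forall F, face P F -> F x -> F y.

(* an m-string from x to y: a list of steps (l, a, b) with a, b in the cell C l;
   consecutive steps are glued: f l b of one step equals f l' a' of the next *)
Fixpoint is_string {X I : Type} (C : I -> pt -> Prop) (f : I -> pt -> X)
    (x y : X) (s : list (I * pt * pt)) : Prop :=
  match s with
  | nil => x = y
  | (l, a, b) :: s' => C l a /\ C l b /\ f l a = x /\ is_string C f (f l b) y s'
  end.

Fixpoint string_length {I : Type} (s : list (I * pt * pt)) : R :=
  match s with
  | nil => 0
  | (_, a, b) :: s' => edist a b + string_length s'
  end.

(* X is the polygonal complex obtained from the convex Euclidean polygons C l
   (l : I) via the projections f l : C l -> X, with d its intrinsic length metric *)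
Definition euclidean_polygonal_complex {X I : Type} (d : X -> X -> R)
    (C : I -> pt -> Prop) (f : I -> pt -> X) : Prop :=
  (forall l, convex_polygon (C l)) /\
  (* the complex is 2-dimensional: some cell is a genuine 2-dimensional polygon *)
  (exists l u v w, C l u /\ C l v /\ C l w /\
     (fst v - fst u) * (snd w - snd u) - (snd v - snd u) * (fst w - fst u) <> 0) /\
  (forall x : X, exists l a, C l a /\ f l a = x) /\
  (forall l a b, C l a -> C l b -> f l a = f l b -> a = b) /\
  (* gluings are isometries between faces *)
  (forall l m a b, C l a -> C m b -> f l a = f m b ->
     exists h : pt -> pt,
       h a = b /\
       (forall u, carrier (C l) a u -> carrier (C m) b (h u)) /\
       (forall v, carrier (C m) b v -> exists u, carrier (C l) a u /\ h u = v) /\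
       (forall u v, carrier (C l) a u -> carrier (C l) a v -> edist (h u) (h v) = edist u v) /\
       (forall u, carrier (C l) a u -> f l u = f m (h u))) /\
  (forall x y : X,
     (forall s, is_string C f x y s -> d x y <= string_length s) /\
     (forall eps, 0 < eps -> exists s, is_string C f x y s /\ string_length s < d x y + eps)).

Definition is_metric {X : Type} (d : X -> X -> R) : Prop :=
  (forall x y, 0 <= d x y) /\ (forall x y, d x y = 0 <-> x = y) /\
  (forall x y, d x y = d y x) /\ (forall x y z, d x z <= d x y + d y z).

Definition unit_I (s : R) : Prop := 0 <= s <= 1.

Definition geodesic {X : Type} (d : X -> X -> R) (a b : X) (c : R -> X) : Prop :=
  c 0 = a /\ c 1 = b /\
  forall s t, unit_I s -> unit_I t -> d (c s) (c t) = Rabs (s - t) * d a b.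

Definition geodesic_space {X : Type} (d : X -> X -> R) : Prop :=
  forall a b : X, exists c, geodesic d a b c.

Definition seg (P Q : pt) (s : R) : pt :=
  (fst P + s * (fst Q - fst P), snd P + s * (snd Q - snd P)).

(* CAT(0) inequality for every geodesic triangle and its Euclidean comparison
   triangle; sides are given as (geodesic, start of comparison side, end) *)
Definition CAT0 {X : Type} (d : X -> X -> R) : Prop :=
  is_metric d /\ geodesic_space d /\
  forall (x y z : X) (c1 c2 c3 : R -> X) (A B D : pt),
    geodesic d x y c1 -> geodesic d y z c2 -> geodesic d z x c3 ->
    edist A B = d x y -> edist B D = d y z -> edist D A = d z x ->
    forall (S1 S2 : (R -> X) * pt * pt),
      In S1 ((c1, A, B) :: (c2, B, D) :: (c3, D, A) :: nil) ->
      In S2 ((c1, A, B) :: (c2, B, D) :: (c3, D, A) :: nil) ->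
      forall s t, unit_I s -> unit_I t ->
        let '(g1, P1, Q1) := S1 in let '(g2, P2, Q2) := S2 in
        d (g1 s) (g2 t) <= edist (seg P1 Q1 s) (seg P2 Q2 t).

Definition geod_seg {X : Type} (d : X -> X -> R) (a b : X) (q : X) : Prop :=
  exists c, geodesic d a b c /\ exists t, unit_I t /\ q = c t.

Definition triangle {X : Type} (d : X -> X -> R) (x y z : X) (q : X) : Prop :=
  geod_seg d x y q \/ geod_seg d y z q \/ geod_seg d z x q.

Definition tri_loop {X : Type} (c1 c2 c3 : R -> X) (s : R) : X :=
  if Rle_dec s (1/3) then c1 (3 * s)
  else if Rle_dec s (2/3) then c2 (3 * s - 1) else c3 (3 * s - 2).

Definition continuous_sq {X : Type} (d : X -> X -> R) (H : R -> R -> X) : Prop :=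
  forall s t, unit_I s -> unit_I t -> forall eps, 0 < eps -> exists delta, 0 < delta /\
    forall s' t', unit_I s' -> unit_I t' -> Rabs (s - s') < delta -> Rabs (t - t') < delta ->
      d (H s t) (H s' t') < eps.

Definition nullhomotopic_in {X : Type} (d : X -> X -> R) (U : X -> Prop)
    (gamma : R -> X) : Prop :=
  exists H : R -> R -> X, continuous_sq d H /\
    (forall s t, unit_I s -> unit_I t -> U (H s t)) /\
    (forall s, unit_I s -> H s 0 = gamma s /\ H s 1 = H 0 1) /\
    (forall t, unit_I t -> H 0 t = H 1 t).

Definition full_triangle {X : Type} (d : X -> X -> R) (x y z : X) (p : X) : Prop :=
  triangle d x y z p \/
  (~ triangle d x y z p /\
   forall c1 c2 c3, geodesic d x y c1 -> geodesic d y z c2 -> geodesic d z x c3 ->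
     ~ nullhomotopic_in d (fun q => q <> p) (tri_loop c1 c2 c3)).

Definition W {X : Type} (d : X -> X -> R) (x1 x2 x3 x4 : X) (i : nat) : X -> Prop :=
  match i with
  | 1%nat => full_triangle d x2 x3 x4
  | 2%nat => full_triangle d x1 x3 x4
  | 3%nat => full_triangle d x1 x2 x4
  | _ => full_triangle d x1 x2 x3
  end.

(* Main.v *)
Require Import Defs.
From Stdlib Require Import Reals List Lra Psatz Classical Lia.
Open Scope R_scope.

Definition rect (a b c e : R) (s t : R) : Prop := a <= s <= b /\ c <= t <= e.

Definition cont_in {X : Type} (d : X -> X -> R) (P : R -> R -> Prop) (F : R -> R -> X) : Prop :=
  forall s t, P s t -> forall eps, 0 < eps -> exists delta, 0 < delta /\
    forall s' t', P s' t' -> Rabs (s - s') < delta -> Rabs (t - t') < delta ->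
      d (F s t) (F s' t') < eps.

Definition rlip (P : R -> R -> Prop) (phi : R -> R -> R) : Prop :=
  exists K, 0 < K /\ forall s t s' t', P s t -> P s' t' ->
    Rabs (phi s t - phi s' t') <= K * (Rabs (s - s') + Rabs (t - t')).

Definition bnd (P : R -> R -> Prop) (phi : R -> R -> R) : Prop :=
  exists B, forall s t, P s t -> Rabs (phi s t) <= B.

Definition pws {X : Type} (b : R) (F1 F2 : R -> R -> X) : R -> R -> X :=
  fun s t => if Rle_dec s b then F1 s t else F2 s t.
Definition pwt {X : Type} (b : R) (F1 F2 : R -> R -> X) : R -> R -> X :=
  fun s t => if Rle_dec t b then F1 s t else F2 s t.

Lemma cont_ext {X} (d : X -> X -> R) P F G :
  cont_in d P F -> (forall s t, P s t -> G s t = F s t) -> cont_in d P G.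
Proof.
  intros HF HE s t Hp eps He. destruct (HF s t Hp eps He) as [dl [Hd Hk]].
  exists dl; split; auto. intros s' t' Hp' H1 H2. rewrite (HE s t Hp), (HE s' t' Hp'). auto.
Qed.

Lemma cont_sub {X} (d : X -> X -> R) (P P' : R -> R -> Prop) F :
  cont_in d P F -> (forall s t, P' s t -> P s t) -> cont_in d P' F.
Proof.
  intros HF HS s t Hp eps He. destruct (HF s t (HS _ _ Hp) eps He) as [dl [Hd Hk]].
  exists dl; split; auto.
Qed.

Lemma abs_lt_split x y : Rabs x < y -> - y < x < y.
Proof. intros H. apply Rabs_def2 in H. lra. Qed.

Lemma abs_lt_join x y : - y < x < y -> Rabs x < y.
Proof. intros H. apply Rabs_def1; lra. Qed.

Lemma paste_s {X} (d : X -> X -> R) a b b' c e F1 F2 :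
  cont_in d (rect a b c e) F1 -> cont_in d (rect b b' c e) F2 ->
  (forall t, c <= t <= e -> F1 b t = F2 b t) ->
  cont_in d (rect a b' c e) (pws b F1 F2).
Proof.
  intros H1 H2 Hb s t [Hs Ht] eps He. unfold pws.
  destruct (Rtotal_order s b) as [Hlt | [Heq | Hgt]].
  - destruct (H1 s t (conj (conj (proj1 Hs) (Rlt_le _ _ Hlt)) Ht) eps He) as [dl [Hd Hk]].
    exists (Rmin dl (b - s)); split.
    + apply Rmin_glb_lt; lra.
    + intros s' t' [Hs' Ht'] D1 D2.
      assert (R1 := Rmin_l dl (b - s)). assert (R2 := Rmin_r dl (b - s)).
      apply abs_lt_split in D1.
      destruct (Rle_dec s b) as [_|n]; [|lra].
      destruct (Rle_dec s' b) as [_|n]; [|lra].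
      apply Hk; [split; lra | apply abs_lt_join; lra | lra].
  - subst s.
    destruct (H1 b t (conj (conj (proj1 Hs) (Rle_refl _)) Ht) eps He) as [dl1 [Hd1 Hk1]].
    destruct (H2 b t (conj (conj (Rle_refl _) (proj2 Hs)) Ht) eps He) as [dl2 [Hd2 Hk2]].
    exists (Rmin dl1 dl2); split.
    + apply Rmin_glb_lt; lra.
    + intros s' t' [Hs' Ht'] D1 D2.
      assert (R1 := Rmin_l dl1 dl2). assert (R2 := Rmin_r dl1 dl2).
      destruct (Rle_dec b b) as [_|n]; [|lra].
      destruct (Rle_dec s' b) as [h|h].
      * apply Hk1; [split; lra | lra | lra].
      * rewrite (Hb t Ht). apply Hk2; [split; lra | lra | lra].
  - destruct (H2 s t (conj (conj (Rlt_le _ _ Hgt) (proj2 Hs)) Ht) eps He) as [dl [Hd Hk]].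
    exists (Rmin dl (s - b)); split.
    + apply Rmin_glb_lt; lra.
    + intros s' t' [Hs' Ht'] D1 D2.
      assert (R1 := Rmin_l dl (s - b)). assert (R2 := Rmin_r dl (s - b)).
      apply abs_lt_split in D1.
      destruct (Rle_dec s b) as [n|_]; [lra|].
      destruct (Rle_dec s' b) as [n|_]; [lra|].
      apply Hk; [split; lra | apply abs_lt_join; lra | lra].
Qed.

Lemma paste_t {X} (d : X -> X -> R) a b c e e' F1 F2 :
  cont_in d (rect a b c e) F1 -> cont_in d (rect a b e e') F2 ->
  (forall s, a <= s <= b -> F1 s e = F2 s e) ->
  cont_in d (rect a b c e') (pwt e F1 F2).
Proof.
  intros H1 H2 Hb s t [Hs Ht] eps He. unfold pwt.
  destruct (Rtotal_order t e) as [Hlt | [Heq | Hgt]].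
  - destruct (H1 s t (conj Hs (conj (proj1 Ht) (Rlt_le _ _ Hlt))) eps He) as [dl [Hd Hk]].
    exists (Rmin dl (e - t)); split.
    + apply Rmin_glb_lt; lra.
    + intros s' t' [Hs' Ht'] D1 D2.
      assert (R1 := Rmin_l dl (e - t)). assert (R2 := Rmin_r dl (e - t)).
      apply abs_lt_split in D2.
      destruct (Rle_dec t e) as [_|n]; [|lra].
      destruct (Rle_dec t' e) as [_|n]; [|lra].
      apply Hk; [split; lra | lra | apply abs_lt_join; lra].
  - subst t.
    destruct (H1 s e (conj Hs (conj (proj1 Ht) (Rle_refl _))) eps He) as [dl1 [Hd1 Hk1]].
    destruct (H2 s e (conj Hs (conj (Rle_refl _) (proj2 Ht))) eps He) as [dl2 [Hd2 Hk2]].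
    exists (Rmin dl1 dl2); split.
    + apply Rmin_glb_lt; lra.
    + intros s' t' [Hs' Ht'] D1 D2.
      assert (R1 := Rmin_l dl1 dl2). assert (R2 := Rmin_r dl1 dl2).
      destruct (Rle_dec e e) as [_|n]; [|lra].
      destruct (Rle_dec t' e) as [h|h].
      * apply Hk1; [split; lra | lra | lra].
      * rewrite (Hb s Hs). apply Hk2; [split; lra | lra | lra].
  - destruct (H2 s t (conj Hs (conj (Rlt_le _ _ Hgt) (proj2 Ht))) eps He) as [dl [Hd Hk]].
    exists (Rmin dl (t - e)); split.
    + apply Rmin_glb_lt; lra.
    + intros s' t' [Hs' Ht'] D1 D2.
      assert (R1 := Rmin_l dl (t - e)). assert (R2 := Rmin_r dl (t - e)).
      apply abs_lt_split in D2.
      destruct (Rle_dec t e) as [n|_]; [lra|].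
      destruct (Rle_dec t' e) as [n|_]; [lra|].
      apply Hk; [split; lra | lra | apply abs_lt_join; lra].
Qed.

Lemma comp_cont {X} (d : X -> X -> R) (P Q : R -> R -> Prop) F f1 f2 :
  cont_in d Q F -> (forall s t, P s t -> Q (f1 s t) (f2 s t)) ->
  rlip P f1 -> rlip P f2 -> cont_in d P (fun s t => F (f1 s t) (f2 s t)).
Proof.
  intros HF HQ [K1 [HK1 L1]] [K2 [HK2 L2]] s t Hp eps He.
  destruct (HF _ _ (HQ s t Hp) eps He) as [dl [Hd Hk]].
  set (M := K1 + K2).
  set (dl' := dl / (2 * M)).
  assert (HM : 0 < M) by (unfold M; lra).
  assert (Hdl' : dl' * (2 * M) = dl) by (unfold dl'; field; lra).
  assert (Hp' : 0 < dl') by (unfold dl'; apply Rdiv_lt_0_compat; lra).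
  exists dl'; split; auto.
  intros s' t' Hps D1 D2. apply Hk; auto.
  - specialize (L1 s t s' t' Hp Hps).
    assert (0 <= Rabs (s - s')) by apply Rabs_pos.
    assert (0 <= Rabs (t - t')) by apply Rabs_pos.
    assert (K1 * (Rabs (s - s') + Rabs (t - t')) < K1 * (2 * dl')) by (apply Rmult_lt_compat_l; lra).
    unfold M in Hdl'. nra.
  - specialize (L2 s t s' t' Hp Hps).
    assert (0 <= Rabs (s - s')) by apply Rabs_pos.
    assert (0 <= Rabs (t - t')) by apply Rabs_pos.
    assert (K2 * (Rabs (s - s') + Rabs (t - t')) < K2 * (2 * dl')) by (apply Rmult_lt_compat_l; lra).
    unfold M in Hdl'. nra.
Qed.

Lemma rlip_const P c : rlip P (fun _ _ => c).
Proof. exists 1; split; [lra|]. intros. replace (c - c) with 0 by ring. rewrite Rabs_R0.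
  assert (0 <= Rabs (s - s')) by apply Rabs_pos. assert (0 <= Rabs (t - t')) by apply Rabs_pos. lra. Qed.

Lemma rlip_s P : rlip P (fun s _ => s).
Proof. exists 1; split; [lra|]. intros.
  assert (0 <= Rabs (t - t')) by apply Rabs_pos. lra. Qed.

Lemma rlip_t P : rlip P (fun _ t => t).
Proof. exists 1; split; [lra|]. intros.
  assert (0 <= Rabs (s - s')) by apply Rabs_pos. lra. Qed.

Lemma rlip_plus P f g : rlip P f -> rlip P g -> rlip P (fun s t => f s t + g s t).
Proof.
  intros [K1 [H1 L1]] [K2 [H2 L2]]. exists (K1 + K2); split; [lra|].
  intros s t s' t' Hp Hp'. specialize (L1 s t s' t' Hp Hp'). specialize (L2 s t s' t' Hp Hp').
  replace (f s t + g s t - (f s' t' + g s' t')) with ((f s t - f s' t') + (g s t - g s' t')) by ring.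
  eapply Rle_trans; [apply Rabs_triang|]. lra.
Qed.

Lemma rlip_opp P f : rlip P f -> rlip P (fun s t => - f s t).
Proof.
  intros [K1 [H1 L1]]. exists K1; split; [lra|].
  intros s t s' t' Hp Hp'. specialize (L1 s t s' t' Hp Hp').
  replace (- f s t - - f s' t') with (- (f s t - f s' t')) by ring. rewrite Rabs_Ropp. lra.
Qed.

Lemma rlip_minus P f g : rlip P f -> rlip P g -> rlip P (fun s t => f s t - g s t).
Proof. intros. unfold Rminus. apply (rlip_plus P f (fun s t => - g s t)); auto. apply rlip_opp; auto. Qed.

Lemma rlip_mult P f g : rlip P f -> rlip P g -> bnd P f -> bnd P g ->
  rlip P (fun s t => f s t * g s t).
Proof.
  intros [K1 [H1 L1]] [K2 [H2 L2]] [Bf Hf] [Bg Hg].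
  exists (Rabs Bg * K1 + Rabs Bf * K2 + 1).
  split. { assert (0 <= Rabs Bg) by apply Rabs_pos. assert (0 <= Rabs Bf) by apply Rabs_pos. nra. }
  intros s t s' t' Hp Hp'. specialize (L1 s t s' t' Hp Hp'). specialize (L2 s t s' t' Hp Hp').
  assert (E1 := Hg s t Hp). assert (E2 := Hf s' t' Hp').
  replace (f s t * g s t - f s' t' * g s' t') with ((f s t - f s' t') * g s t + f s' t' * (g s t - g s' t')) by ring.
  eapply Rle_trans; [apply Rabs_triang|]. rewrite !Rabs_mult.
  destruct (ex_intro (fun S => S = Rabs (s - s') + Rabs (t - t')) _ eq_refl) as [S HS].
  rewrite <- HS in *.
  assert (0 <= S) by (rewrite HS; assert (0 <= Rabs (s - s')) by apply Rabs_pos; assert (0 <= Rabs (t - t')) by apply Rabs_pos; lra).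
  assert (Bg <= Rabs Bg) by apply RRle_abs. assert (Bf <= Rabs Bf) by apply RRle_abs.
  assert (0 <= Rabs (f s t - f s' t')) by apply Rabs_pos.
  assert (0 <= Rabs (g s t)) by apply Rabs_pos.
  assert (0 <= Rabs (f s' t')) by apply Rabs_pos.
  assert (0 <= Rabs (g s t - g s' t')) by apply Rabs_pos.
  assert (Rabs (f s t - f s' t') * Rabs (g s t) <= (K1 * S) * Rabs Bg).
  { apply Rmult_le_compat; lra. }
  assert (Rabs (f s' t') * Rabs (g s t - g s' t') <= Rabs Bf * (K2 * S)) by (apply Rmult_le_compat; lra).
  nra.
Qed.

Lemma bnd_const P c : bnd P (fun _ _ => c).
Proof. exists (Rabs c). intros; lra. Qed.

Lemma bnd_s a b c e : bnd (rect a b c e) (fun s _ => s).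
Proof. exists (Rabs a + Rabs b). intros s t [[H1 H2] _].
  unfold Rabs; repeat destruct Rcase_abs; lra. Qed.

Lemma bnd_t a b c e : bnd (rect a b c e) (fun _ t => t).
Proof. exists (Rabs c + Rabs e). intros s t [_ [H1 H2]].
  unfold Rabs; repeat destruct Rcase_abs; lra. Qed.

Lemma bnd_plus P f g : bnd P f -> bnd P g -> bnd P (fun s t => f s t + g s t).
Proof. intros [B1 H1] [B2 H2]. exists (B1 + B2). intros s t Hp.
  eapply Rle_trans; [apply Rabs_triang|]. specialize (H1 s t Hp). specialize (H2 s t Hp). lra. Qed.

Lemma bnd_opp P f : bnd P f -> bnd P (fun s t => - f s t).
Proof. intros [B1 H1]. exists B1. intros s t Hp. rewrite Rabs_Ropp. auto. Qed.

Lemma bnd_minus P f g : bnd P f -> bnd P g -> bnd P (fun s t => f s t - g s t).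
Proof. intros. unfold Rminus. apply (bnd_plus P f (fun s t => - g s t)); auto. apply bnd_opp; auto. Qed.

Lemma bnd_mult P f g : bnd P f -> bnd P g -> bnd P (fun s t => f s t * g s t).
Proof. intros [B1 H1] [B2 H2]. exists (Rabs B1 * Rabs B2). intros s t Hp.
  rewrite Rabs_mult. specialize (H1 s t Hp). specialize (H2 s t Hp).
  assert (B1 <= Rabs B1) by apply RRle_abs. assert (B2 <= Rabs B2) by apply RRle_abs.
  apply Rmult_le_compat; try apply Rabs_pos; lra. Qed.

Definition clamp (x : R) : R := Rmax 0 (Rmin 1 x).

Lemma clamp_lip x y : Rabs (clamp x - clamp y) <= Rabs (x - y).
Proof. unfold clamp, Rmax, Rmin, Rabs. repeat destruct Rle_dec; repeat destruct Rcase_abs; lra. Qed.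

Lemma clamp_bnd x : 0 <= clamp x <= 1.
Proof. unfold clamp, Rmax, Rmin. repeat destruct Rle_dec; lra. Qed.

Lemma clamp_0 x : x <= 0 -> clamp x = 0.
Proof. unfold clamp, Rmax, Rmin. repeat destruct Rle_dec; lra. Qed.
Lemma clamp_1 x : 1 <= x -> clamp x = 1.
Proof. unfold clamp, Rmax, Rmin. repeat destruct Rle_dec; lra. Qed.
Lemma clamp_id x : 0 <= x <= 1 -> clamp x = x.
Proof. unfold clamp, Rmax, Rmin. repeat destruct Rle_dec; lra. Qed.

Lemma rlip_clamp P f : rlip P f -> rlip P (fun s t => clamp (f s t)).
Proof. intros [K [HK L]]. exists K; split; auto. intros. eapply Rle_trans; [apply clamp_lip|]. auto. Qed.

Lemma bnd_clamp P f : bnd P (fun s t => clamp (f s t)).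
Proof. exists 1. intros. destruct (clamp_bnd (f s t)). rewrite Rabs_right; lra. Qed.

Lemma rlip_sub P P' f : rlip P f -> (forall s t, P' s t -> P s t) -> rlip P' f.
Proof. intros [K [HK L]] HS. exists K; split; auto. Qed.

Ltac rlip_tac :=
  repeat first
    [ apply rlip_const | apply rlip_s | apply rlip_t | apply rlip_clamp
    | apply rlip_plus | apply rlip_minus | apply rlip_opp | apply rlip_mult
    | apply bnd_const | apply bnd_s | apply bnd_t | apply bnd_clamp
    | apply bnd_plus | apply bnd_minus | apply bnd_opp | apply bnd_mult ].


Lemma geo_cont {X} (d : X -> X -> R) a b c :
  geodesic d a b c -> cont_in d (rect 0 1 0 1) (fun u _ => c u).
Proof.
  intros [_ [_ Hg]] s t [Hs Ht] eps He.
  exists (eps / (Rabs (d a b) + 1)). split.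
  { apply Rdiv_lt_0_compat; auto. assert (0 <= Rabs (d a b)) by apply Rabs_pos. lra. }
  intros s' t' [Hs' Ht'] D1 D2. rewrite Hg by (unfold unit_I; lra).
  assert (0 <= Rabs (d a b)) by apply Rabs_pos.
  assert (d a b <= Rabs (d a b)) by apply RRle_abs.
  assert (0 <= Rabs (s - s')) by apply Rabs_pos.
  assert (E : eps / (Rabs (d a b) + 1) * (Rabs (d a b) + 1) = eps) by (field; lra).
  destruct (ex_intro (fun z => z = eps / (Rabs (d a b) + 1)) _ eq_refl) as [z Hz].
  rewrite <- Hz in *.
  assert (Rabs (s - s') * Rabs (d a b) <= z * Rabs (d a b)) by (apply Rmult_le_compat_r; lra).
  assert (Rabs (s - s') * d a b <= Rabs (s - s') * Rabs (d a b)) by (apply Rmult_le_compat_l; lra).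
  nra.
Qed.

Lemma csq_cont {X} (d : X -> X -> R) H : continuous_sq d H -> cont_in d (rect 0 1 0 1) H.
Proof.
  intros Hc s t [Hs Ht] eps He. destruct (Hc s t Hs Ht eps He) as [dl [Hd Hk]].
  exists dl; split; auto. intros s' t' [Hs' Ht']. apply Hk; auto.
Qed.

Lemma cont_csq {X} (d : X -> X -> R) H : cont_in d (rect 0 1 0 1) H -> continuous_sq d H.
Proof.
  intros Hc s t Hs Ht eps He. destruct (Hc s t (conj Hs Ht) eps He) as [dl [Hd Hk]].
  exists dl; split; auto. intros s' t' Hs' Ht'. apply Hk; split; auto.
Qed.

Ltac rsq := let s := fresh in let t := fresh in let H := fresh in
  intros s t H; unfold rect in *; destruct H as [[? ?] [? ?]]; split; split; nra.

Ltac comp_tac HH :=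
  eapply (comp_cont _ _ (rect 0 1 0 1)); [exact HH | rsq | rlip_tac | rlip_tac ].

Definition Fb {X : Type} (H : R -> R -> X) : R -> R -> X :=
  pwt (1/2)
    (pws (1/4) (fun s t => H 0 ((8*s)*t))
       (pws (3/4) (fun s t => H (2*s-1/2) (2*t)) (fun s t => H 0 ((8 - 8*s)*t))))
    (pws (1/4) (fun s t => H 0 ((4*s)*(2-2*t)))
       (pws (3/4) (fun s t => H 0 (2-2*t)) (fun s t => H 0 ((4-4*s)*(2-2*t))))).

Lemma Fb_cont {X} (d : X -> X -> R) H :
  cont_in d (rect 0 1 0 1) H -> (forall t, 0 <= t <= 1 -> H 0 t = H 1 t) ->
  (forall s, 0 <= s <= 1 -> H s 1 = H 0 1) -> cont_in d (rect 0 1 0 1) (Fb H).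
Proof.
  intros HH Hside Htop. unfold Fb.
  apply paste_t.
  - apply paste_s; [comp_tac HH | apply paste_s; [comp_tac HH | comp_tac HH |] |].
    + intros t Ht. replace (2 * (3/4) - 1/2) with 1 by lra. rewrite <- Hside by lra. f_equal; lra.
    + intros t Ht. unfold pws. destruct Rle_dec; [|lra]. f_equal; lra.
  - apply paste_s; [comp_tac HH | apply paste_s; [comp_tac HH | comp_tac HH |] |].
    + intros t Ht. f_equal; lra.
    + intros t Ht. unfold pws. destruct Rle_dec; [|lra]. f_equal; lra.
  - intros s Hs. unfold pws. destruct Rle_dec; [f_equal; lra|].
    destruct Rle_dec; [|f_equal; lra].
    replace (2 * (1/2)) with 1 by lra. rewrite Htop by lra. f_equal; lra.
Qed.

Lemma Fb_vals {X} (H : R -> R -> X) (U : X -> Prop) :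
  (forall s t, 0 <= s <= 1 -> 0 <= t <= 1 -> U (H s t)) ->
  forall s t, 0 <= s <= 1 -> 0 <= t <= 1 -> U (Fb H s t).
Proof.
  intros HU s t Hs Ht. unfold Fb, pws, pwt.
  repeat destruct Rle_dec; apply HU; nra.
Qed.

Lemma Fb_side0 {X} (H : R -> R -> X) t : 0 <= t <= 1 -> Fb H 0 t = H 0 0.
Proof. intros. unfold Fb, pws, pwt. repeat destruct Rle_dec; try lra; f_equal; lra. Qed.

Lemma Fb_side1 {X} (H : R -> R -> X) t : 0 <= t <= 1 -> Fb H 1 t = H 0 0.
Proof. intros. unfold Fb, pws, pwt. repeat destruct Rle_dec; try lra; f_equal; lra. Qed.

Lemma Fb_top {X} (H : R -> R -> X) s : 0 <= s <= 1 -> Fb H s 1 = H 0 0.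
Proof. intros. unfold Fb, pws, pwt. repeat destruct Rle_dec; try lra; f_equal; lra. Qed.

Lemma Fb_bot {X} (H : R -> R -> X) s : 0 <= s <= 1 ->
  Fb H s 0 = if Rle_dec s (1/4) then H 0 0 else if Rle_dec s (3/4) then H (2*s-1/2) 0 else H 0 0.
Proof. intros. unfold Fb, pws, pwt. repeat destruct Rle_dec; try lra; f_equal; lra. Qed.

Lemma comp1 {X} (d : X -> X -> R) (P : R -> R -> Prop) (g : R -> X) f :
  cont_in d (rect 0 1 0 1) (fun u _ => g u) -> (forall s t, P s t -> 0 <= f s t <= 1) ->
  rlip P f -> cont_in d P (fun s t => g (f s t)).
Proof.
  intros Hg Hf Hl.
  apply (comp_cont d P (rect 0 1 0 1) (fun u _ => g u) f (fun _ _ => 0)); auto.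
  - intros s t Hp. split; [apply Hf; auto| lra].
  - apply rlip_const.
Qed.

Ltac r01 := let s := fresh in let t := fresh in let H := fresh in
  intros s t H; unfold rect in *; destruct H as [[? ?] [? ?]]; split; nra.

Ltac comp1_tac HH := eapply comp1; [exact HH | r01 | rlip_tac].

Definition Kw {X : Type} (g1 m g2 : R -> X) : R -> R -> X :=
  pws (1/4) (fun s t => g1 t)
   (pws (5/12) (fun s t => g1 (t * (5/2 - 6*s)))
    (pws (7/12) (fun s t => m (6*s - 5/2))
     (pws (3/4) (fun s t => g2 (t * (6*s - 7/2)))
       (fun s t => g2 t)))).

Lemma Kw_cont {X} (d : X -> X -> R) g1 m g2 :
  cont_in d (rect 0 1 0 1) (fun u _ => g1 u) ->
  cont_in d (rect 0 1 0 1) (fun u _ => m u) ->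
  cont_in d (rect 0 1 0 1) (fun u _ => g2 u) ->
  g1 0 = m 0 -> m 1 = g2 0 ->
  cont_in d (rect 0 1 0 1) (Kw g1 m g2).
Proof.
  intros H1 H2 H3 E1 E2. unfold Kw.
  apply paste_s; [comp1_tac H1 | |].
  2:{ intros t Ht. unfold pws. destruct Rle_dec; [|lra]. f_equal; lra. }
  apply paste_s; [comp1_tac H1 | |].
  2:{ intros t Ht. unfold pws. destruct Rle_dec; [|lra].
      replace (t * (5/2 - 6 * (5/12))) with 0 by lra. rewrite E1. f_equal; lra. }
  apply paste_s; [comp1_tac H2 | |].
  2:{ intros t Ht. unfold pws. destruct Rle_dec; [|lra].
      replace (t * (6 * (7/12) - 7/2)) with 0 by lra. rewrite <- E2. f_equal; lra. }
  apply paste_s; [comp1_tac H3 | comp1_tac H3 |].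
  intros t Ht. f_equal; lra.
Qed.

Lemma Kw_vals {X} (g1 m g2 : R -> X) (U : X -> Prop) :
  (forall u, 0 <= u <= 1 -> U (g1 u)) -> (forall u, 0 <= u <= 1 -> U (m u)) ->
  (forall u, 0 <= u <= 1 -> U (g2 u)) ->
  forall s t, 0 <= s <= 1 -> 0 <= t <= 1 -> U (Kw g1 m g2 s t).
Proof.
  intros U1 U2 U3 s t Hs Ht. unfold Kw, pws.
  repeat destruct Rle_dec; first [apply U1 | apply U2 | apply U3]; nra.
Qed.

Lemma Kw_bot {X} (g1 m g2 : R -> X) s : 0 <= s <= 1 -> g1 0 = m 0 -> m 1 = g2 0 ->
  Kw g1 m g2 s 0 = m (clamp (6 * s - 5/2)).
Proof.
  intros Hs E1 E2. unfold Kw, pws. repeat destruct Rle_dec.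
  - rewrite clamp_0 by lra. auto.
  - rewrite clamp_0 by lra. rewrite <- E1. f_equal; lra.
  - rewrite clamp_id by lra. auto.
  - rewrite clamp_1 by lra. rewrite E2. f_equal; lra.
  - rewrite clamp_1 by lra. rewrite E2. f_equal; lra.
Qed.

Lemma Kw_side0 {X} (g1 m g2 : R -> X) t : Kw g1 m g2 0 t = g1 t.
Proof. unfold Kw, pws. destruct Rle_dec; [auto|lra]. Qed.

Lemma Kw_side1 {X} (g1 m g2 : R -> X) t : Kw g1 m g2 1 t = g2 t.
Proof. unfold Kw, pws. repeat destruct Rle_dec; try lra. auto. Qed.

Definition Tk {X : Type} (g1 m g2 : R -> X) (H : R -> R -> X) : R -> R -> X :=
  pwt (1/2) (fun s t => Kw g1 m g2 s (2*t)) (fun s t => Fb H s (2*t-1)).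

Definition rv {X : Type} (c : R -> X) : R -> X := fun s => c (1 - s).

Lemma Tk_cont {X} (d : X -> X -> R) g1 m g2 H :
  cont_in d (rect 0 1 0 1) (fun u _ => g1 u) ->
  cont_in d (rect 0 1 0 1) (fun u _ => m u) ->
  cont_in d (rect 0 1 0 1) (fun u _ => g2 u) ->
  g1 0 = m 0 -> m 1 = g2 0 ->
  cont_in d (rect 0 1 0 1) H -> (forall t, 0 <= t <= 1 -> H 0 t = H 1 t) ->
  (forall s, 0 <= s <= 1 -> H s 1 = H 0 1) ->
  (forall u, 0 <= u <= 1 -> H u 0 = tri_loop (rv g1) m g2 u) -> g1 1 = g2 1 ->
  cont_in d (rect 0 1 0 1) (Tk g1 m g2 H).
Proof.
  intros H1 H2 H3 E1 E2 HH Hside Htop Hl E3. unfold Tk.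
  apply paste_t.
  - apply (comp_cont d _ (rect 0 1 0 1) (Kw g1 m g2) (fun s _ => s) (fun _ t => 2 * t)).
    + apply Kw_cont; auto.
    + rsq.
    + rlip_tac.
    + rlip_tac.
  - apply (comp_cont d _ (rect 0 1 0 1) (Fb H) (fun s _ => s) (fun _ t => 2 * t - 1)).
    + apply Fb_cont; auto.
    + rsq.
    + rlip_tac.
    + rlip_tac.
  - intros s Hs. replace (2 * (1/2) - 1) with 0 by lra. replace (2 * (1/2)) with 1 by lra.
    rewrite Fb_bot by lra.
    unfold Kw, pws. unfold rv in Hl.
    repeat destruct Rle_dec; try lra; rewrite Hl by lra; unfold tri_loop;
      repeat destruct Rle_dec; try lra. all: try (f_equal; lra).
  all: try (rewrite E3; f_equal; lra).
Qed.

Definition edge {X : Type} (g : R -> X) (t : R) : X := if Rle_dec t (1/2) then g (2*t) else g 1.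

Lemma Tk_vals {X} (g1 m g2 : R -> X) H (U : X -> Prop) :
  (forall u, 0 <= u <= 1 -> U (g1 u)) -> (forall u, 0 <= u <= 1 -> U (m u)) ->
  (forall u, 0 <= u <= 1 -> U (g2 u)) ->
  (forall s t, 0 <= s <= 1 -> 0 <= t <= 1 -> U (H s t)) ->
  forall s t, 0 <= s <= 1 -> 0 <= t <= 1 -> U (Tk g1 m g2 H s t).
Proof.
  intros U1 U2 U3 UH s t Hs Ht. unfold Tk, pwt. destruct Rle_dec.
  - apply Kw_vals; auto; lra.
  - apply Fb_vals; auto; lra.
Qed.

Lemma Tk_bot {X} (g1 m g2 : R -> X) H s : 0 <= s <= 1 -> g1 0 = m 0 -> m 1 = g2 0 ->
  Tk g1 m g2 H s 0 = m (clamp (6 * s - 5/2)).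
Proof.
  intros. unfold Tk, pwt. destruct Rle_dec; [|lra]. replace (2 * 0) with 0 by lra.
  apply Kw_bot; auto.
Qed.

Lemma Tk_side0 {X} (g1 m g2 : R -> X) H t : 0 <= t <= 1 ->
  (forall u, 0 <= u <= 1 -> H u 0 = tri_loop (rv g1) m g2 u) ->
  Tk g1 m g2 H 0 t = edge g1 t.
Proof.
  intros Ht Hl. unfold Tk, pwt, edge. destruct Rle_dec.
  - apply Kw_side0.
  - rewrite Fb_side0 by lra. rewrite Hl by lra. unfold tri_loop, rv.
    destruct Rle_dec; [|lra]. f_equal; lra.
Qed.

Lemma Tk_side1 {X} (g1 m g2 : R -> X) H t : 0 <= t <= 1 ->
  (forall u, 0 <= u <= 1 -> H u 0 = tri_loop (rv g1) m g2 u) -> g1 1 = g2 1 ->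
  Tk g1 m g2 H 1 t = edge g2 t.
Proof.
  intros Ht Hl E. unfold Tk, pwt, edge. destruct Rle_dec.
  - apply Kw_side1.
  - rewrite Fb_side1 by lra. rewrite Hl by lra. unfold tri_loop, rv.
    destruct Rle_dec; [|lra]. rewrite <- E. f_equal; lra.
Qed.

Lemma Tk_top {X} (g1 m g2 : R -> X) H s : 0 <= s <= 1 ->
  (forall u, 0 <= u <= 1 -> H u 0 = tri_loop (rv g1) m g2 u) ->
  Tk g1 m g2 H s 1 = g1 1.
Proof.
  intros Hs Hl. unfold Tk, pwt. destruct Rle_dec; [lra|].
  replace (2 * 1 - 1) with 1 by lra. rewrite Fb_top by lra. rewrite Hl by lra. unfold tri_loop, rv.
  destruct Rle_dec; [|lra]. f_equal; lra.
Qed.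

Definition cat3 {X : Type} (T1 T2 T3 : R -> R -> X) : R -> R -> X :=
  pws (1/3) (fun s t => T1 (3*s) t) (pws (2/3) (fun s t => T2 (3*s-1) t) (fun s t => T3 (3*s-2) t)).

Lemma cat3_cont {X} (d : X -> X -> R) T1 T2 T3 :
  cont_in d (rect 0 1 0 1) T1 -> cont_in d (rect 0 1 0 1) T2 -> cont_in d (rect 0 1 0 1) T3 ->
  (forall t, 0 <= t <= 1 -> T1 1 t = T2 0 t) -> (forall t, 0 <= t <= 1 -> T2 1 t = T3 0 t) ->
  cont_in d (rect 0 1 0 1) (cat3 T1 T2 T3).
Proof.
  intros C1 C2 C3 E1 E2. unfold cat3.
  apply paste_s.
  - apply (comp_cont d _ (rect 0 1 0 1) T1 (fun s _ => 3 * s) (fun _ t => t)); auto; [rsq|rlip_tac|rlip_tac].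
  - apply paste_s.
    + apply (comp_cont d _ (rect 0 1 0 1) T2 (fun s _ => 3 * s - 1) (fun _ t => t)); auto; [rsq|rlip_tac|rlip_tac].
    + apply (comp_cont d _ (rect 0 1 0 1) T3 (fun s _ => 3 * s - 2) (fun _ t => t)); auto; [rsq|rlip_tac|rlip_tac].
    + intros t Ht. replace (3 * (2/3) - 1) with 1 by lra. replace (3 * (2/3) - 2) with 0 by lra. auto.
  - intros t Ht. unfold pws. destruct Rle_dec; [|lra].
    replace (3 * (1/3) - 1) with 0 by lra. replace (3 * (1/3)) with 1 by lra. auto.
Qed.

Definition sig (s : R) : R := (clamp (18*s - 5/2) + clamp (18*s - 17/2) + clamp (18*s - 29/2)) * (1/3).

Lemma tri_cont {X} (d : X -> X -> R) (m1 m2 m3 : R -> X) :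
  cont_in d (rect 0 1 0 1) (fun u _ => m1 u) ->
  cont_in d (rect 0 1 0 1) (fun u _ => m2 u) ->
  cont_in d (rect 0 1 0 1) (fun u _ => m3 u) ->
  m1 1 = m2 0 -> m2 1 = m3 0 ->
  cont_in d (rect 0 1 0 1) (fun u _ => tri_loop m1 m2 m3 u).
Proof.
  intros H1 H2 H3 E1 E2.
  apply (cont_ext d _ (pws (1/3) (fun s t => m1 (3*s)) (pws (2/3) (fun s t => m2 (3*s-1)) (fun s t => m3 (3*s-2))))).
  2:{ intros. unfold pws, tri_loop. reflexivity. }
  apply paste_s; [comp1_tac H1| |].
  - apply paste_s; [comp1_tac H2 | comp1_tac H3 |].
    intros t Ht. replace (3 * (2/3) - 1) with 1 by lra. replace (3 * (2/3) - 2) with 0 by lra. auto.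
  - intros t Ht. unfold pws. destruct Rle_dec; [|lra].
    replace (3 * (1/3) - 1) with 0 by lra. replace (3 * (1/3)) with 1 by lra. auto.
Qed.

Definition path_ok {X : Type} (d : X -> X -> R) (U : X -> Prop) (g : R -> X) (a b : X) : Prop :=
  cont_in d (rect 0 1 0 1) (fun u _ => g u) /\ g 0 = a /\ g 1 = b /\ (forall u, 0 <= u <= 1 -> U (g u)).

Definition hnull {X : Type} (d : X -> X -> R) (U : X -> Prop) (H : R -> R -> X) (l : R -> X) : Prop :=
  cont_in d (rect 0 1 0 1) H /\ (forall t, 0 <= t <= 1 -> H 0 t = H 1 t) /\
  (forall s, 0 <= s <= 1 -> H s 1 = H 0 1) /\
  (forall s t, 0 <= s <= 1 -> 0 <= t <= 1 -> U (H s t)) /\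
  (forall u, 0 <= u <= 1 -> H u 0 = l u).

Lemma sig_bnd s : 0 <= sig s <= 1.
Proof. unfold sig. pose proof (clamp_bnd (18*s - 5/2)). pose proof (clamp_bnd (18*s - 17/2)).
  pose proof (clamp_bnd (18*s - 29/2)). lra. Qed.

Lemma sig0 : sig 0 = 0.
Proof. unfold sig. rewrite !clamp_0 by lra. lra. Qed.
Lemma sig1 : sig 1 = 1.
Proof. unfold sig. rewrite !clamp_1 by lra. lra. Qed.

Lemma cat_bot {X} (g1 g2 g3 m1 m2 m3 : R -> X) H1 H2 H3 s :
  0 <= s <= 1 ->
  g1 0 = m1 0 -> m1 1 = g2 0 -> g2 0 = m2 0 -> m2 1 = g3 0 -> g3 0 = m3 0 -> m3 1 = g1 0 ->
  cat3 (Tk g1 m1 g2 H1) (Tk g2 m2 g3 H2) (Tk g3 m3 g1 H3) s 0 = tri_loop m1 m2 m3 (sig s).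
Proof.
  intros Hs E1 E2 E3 E4 E5 E6. unfold cat3, pws.
  destruct (Rle_dec s (1/3)).
  - rewrite Tk_bot by (auto; lra). unfold sig.
    rewrite (clamp_0 (18 * s - 17/2)) by lra. rewrite (clamp_0 (18 * s - 29/2)) by lra.
    pose proof (clamp_bnd (18*s - 5/2)).
    unfold tri_loop. destruct Rle_dec; [|lra]. f_equal.
    replace (6 * (3 * s) - 5/2) with (18 * s - 5/2) by lra. lra.
  - destruct (Rle_dec s (2/3)).
    + rewrite Tk_bot by (auto; lra). unfold sig.
      rewrite (clamp_1 (18 * s - 5/2)) by lra. rewrite (clamp_0 (18 * s - 29/2)) by lra.
      replace (6 * (3 * s - 1) - 5/2) with (18 * s - 17/2) by lra.
      pose proof (clamp_bnd (18*s - 17/2)).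
      unfold tri_loop. destruct Rle_dec.
      * assert (Hc : clamp (18 * s - 17/2) = 0) by lra. rewrite Hc. rewrite <- E3, <- E2. f_equal; lra.
      * destruct Rle_dec; [|lra]. f_equal; lra.
    + rewrite Tk_bot by (auto; lra). unfold sig.
      rewrite (clamp_1 (18 * s - 5/2)) by lra. rewrite (clamp_1 (18 * s - 17/2)) by lra.
      replace (6 * (3 * s - 2) - 5/2) with (18 * s - 29/2) by lra.
      pose proof (clamp_bnd (18*s - 29/2)).
      unfold tri_loop. destruct Rle_dec; [lra|]. destruct Rle_dec.
      * assert (Hc : clamp (18 * s - 29/2) = 0) by lra. rewrite Hc. rewrite <- E5, <- E4. f_equal; lra.
      * f_equal; lra.
Qed.

Lemma big {X} (d : X -> X -> R) (U : X -> Prop) o v1 v2 v3 g1 g2 g3 m1 m2 m3 H1 H2 H3 :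
  path_ok d U g1 v1 o -> path_ok d U g2 v2 o -> path_ok d U g3 v3 o ->
  path_ok d U m1 v1 v2 -> path_ok d U m2 v2 v3 -> path_ok d U m3 v3 v1 ->
  hnull d U H1 (tri_loop (rv g1) m1 g2) ->
  hnull d U H2 (tri_loop (rv g2) m2 g3) ->
  hnull d U H3 (tri_loop (rv g3) m3 g1) ->
  nullhomotopic_in d U (tri_loop m1 m2 m3).
Proof.
  intros [Cg1 [Ag1 [Bg1 Ug1]]] [Cg2 [Ag2 [Bg2 Ug2]]] [Cg3 [Ag3 [Bg3 Ug3]]]
         [Cm1 [Am1 [Bm1 Um1]]] [Cm2 [Am2 [Bm2 Um2]]] [Cm3 [Am3 [Bm3 Um3]]]
         [CH1 [SH1 [TH1 [UH1 LH1]]]] [CH2 [SH2 [TH2 [UH2 LH2]]]] [CH3 [SH3 [TH3 [UH3 LH3]]]].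
  set (G := cat3 (Tk g1 m1 g2 H1) (Tk g2 m2 g3 H2) (Tk g3 m3 g1 H3)).
  assert (CG : cont_in d (rect 0 1 0 1) G).
  { apply cat3_cont.
    - apply Tk_cont; auto; congruence.
    - apply Tk_cont; auto; congruence.
    - apply Tk_cont; auto; congruence.
    - intros t Ht. rewrite Tk_side1, Tk_side0; auto; congruence.
    - intros t Ht. rewrite Tk_side1, Tk_side0; auto; congruence. }
  assert (UG : forall s t, 0 <= s <= 1 -> 0 <= t <= 1 -> U (G s t)).
  { intros s t Hs Ht. unfold G, cat3, pws.
    destruct Rle_dec; [|destruct Rle_dec]; apply Tk_vals; auto; lra. }
  assert (TG : forall s, 0 <= s <= 1 -> G s 1 = o).
  { intros s Hs. unfold G, cat3, pws.
    destruct Rle_dec; [|destruct Rle_dec]; rewrite Tk_top; auto; lra. }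
  assert (G0 : forall t, 0 <= t <= 1 -> G 0 t = edge g1 t).
  { intros t Ht. unfold G, cat3, pws. destruct Rle_dec; [|lra].
    replace (3 * 0) with 0 by lra. apply Tk_side0; auto. }
  assert (G1 : forall t, 0 <= t <= 1 -> G 1 t = edge g1 t).
  { intros t Ht. unfold G, cat3, pws. destruct Rle_dec; [lra|]. destruct Rle_dec; [lra|].
    replace (3 * 1 - 2) with 1 by lra. apply Tk_side1; auto; congruence. }
  assert (GB : forall s, 0 <= s <= 1 -> G s 0 = tri_loop m1 m2 m3 (sig s)).
  { intros s Hs. unfold G. apply cat_bot; auto; congruence. }
  set (N := pwt (1/2) (fun s t => tri_loop m1 m2 m3 ((1 - 2*t)*s + (2*t) * sig s))
                      (fun s t => G s (2*t - 1))).
  assert (Hg0 : tri_loop m1 m2 m3 0 = v1).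
  { unfold tri_loop. destruct Rle_dec; [|lra]. replace (3 * 0) with 0 by lra. auto. }
  assert (Hg1 : tri_loop m1 m2 m3 1 = v1).
  { unfold tri_loop. destruct Rle_dec; [lra|]. destruct Rle_dec; [lra|].
    replace (3 * 1 - 2) with 1 by lra. auto. }
  exists N. split; [|split; [|split]].
  - apply cont_csq. unfold N. apply paste_t.
    + eapply comp1.
      * apply tri_cont; auto; congruence.
      * intros s t [Hs Ht]. pose proof (sig_bnd s). split; nra.
      * unfold sig. rlip_tac.
    + apply (comp_cont d _ (rect 0 1 0 1) G (fun s _ => s) (fun _ t => 2 * t - 1)); auto; [rsq|rlip_tac|rlip_tac].
    + intros s Hs. replace (2 * (1/2) - 1) with 0 by lra. rewrite GB by auto. f_equal. lra.
  - intros s t Hs Ht. unfold unit_I in *. unfold N, pwt. destruct Rle_dec.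
    + pose proof (sig_bnd s). unfold tri_loop.
      repeat destruct Rle_dec; [apply Um1 | apply Um2 | apply Um3]; split; nra.
    + apply UG; lra.
  - intros s Hs. unfold unit_I in *. unfold N, pwt. split.
    + destruct Rle_dec; [|lra]. f_equal. lra.
    + destruct Rle_dec; [lra|].
      replace (2 * 1 - 1) with 1 by lra. rewrite !TG by lra. auto.
  - intros t Ht. unfold unit_I in *. unfold N, pwt. destruct Rle_dec.
    + rewrite sig0, sig1. replace ((1 - 2 * t) * 0 + 2 * t * 0) with 0 by lra.
      replace ((1 - 2 * t) * 1 + 2 * t * 1) with 1 by lra. congruence.
    + rewrite G0, G1 by lra. auto.
Qed.

Lemma hnull_of {X} (d : X -> X -> R) U l : nullhomotopic_in d U l -> exists H, hnull d U H l.
Proof.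
  intros [H [Hc [HU [Hb Hs]]]]. exists H. unfold hnull.
  split; [apply csq_cont; auto|]. split; [intros; apply Hs; auto|].
  split; [intros; apply Hb; auto|]. split; [intros; apply HU; auto|].
  intros; apply Hb; auto.
Qed.

Lemma null_ext {X} (d : X -> X -> R) U l l' : nullhomotopic_in d U l ->
  (forall s, 0 <= s <= 1 -> l' s = l s) -> nullhomotopic_in d U l'.
Proof.
  intros [H [Hc [HU [Hb Hs]]]] E. exists H. split; auto. split; auto. split; auto.
  intros s Hs'. destruct (Hb s Hs'). split; auto. rewrite E; auto.
Qed.

Lemma rv_geo {X} (d : X -> X -> R) a b c : (forall x y, d x y = d y x) ->
  geodesic d a b c -> geodesic d b a (rv c).
Proof.
  intros Hsym [H0 [H1 Hg]]. unfold rv. split; [replace (1 - 0) with 1 by lra; auto|].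
  split; [replace (1 - 1) with 0 by lra; auto|].
  intros s t Hs Ht. unfold unit_I in *. rewrite Hg by (unfold unit_I; lra).
  rewrite Hsym. f_equal. replace (1 - s - (1 - t)) with (- (s - t)) by ring. apply Rabs_Ropp.
Qed.

Lemma geo_uniq {X} (d : X -> X -> R) a b c c' : CAT0 d ->
  geodesic d a b c -> geodesic d a b c' -> forall s, 0 <= s <= 1 -> c s = c' s.
Proof.
  intros [[Hpos [Hzero [Hsym Htri]]] [_ Hcat]] Gc Gc' s Hs.
  assert (Gk : geodesic d b b (fun _ => b)).
  { split; auto. split; auto. intros. assert (d b b = 0) by (apply Hzero; auto). rewrite H1. ring. }
  assert (Gr := rv_geo d a b c' Hsym Gc').
  set (D := d a b).
  specialize (Hcat a b b c (fun _ => b) (rv c') (0, 0) (D, 0) (D, 0) Gc Gk Gr).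
  assert (HD : 0 <= D) by (apply Hpos).
  assert (E1 : edist (0, 0) (D, 0) = d a b).
  { unfold edist; cbn [fst snd]. replace ((0 - D) ^ 2 + (0 - 0) ^ 2) with (D * D) by ring. rewrite sqrt_square; auto. }
  assert (E2 : edist (D, 0) (D, 0) = d b b).
  { unfold edist; cbn [fst snd]. replace ((D - D) ^ 2 + (0 - 0) ^ 2) with 0 by ring. rewrite sqrt_0.
    symmetry. apply Hzero; auto. }
  assert (E3 : edist (D, 0) (0, 0) = d b a).
  { unfold edist; cbn [fst snd]. replace ((D - 0) ^ 2 + (0 - 0) ^ 2) with (D * D) by ring. rewrite sqrt_square; auto. }
  specialize (Hcat E1 E2 E3 (c, (0,0), (D,0)) (rv c', (D, 0), (0, 0))).
  specialize (Hcat ltac:(simpl; auto) ltac:(simpl; auto) s (1 - s) ltac:(unfold unit_I; lra) ltac:(unfold unit_I; lra)).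
  simpl in Hcat. unfold rv in Hcat. replace (1 - (1 - s)) with s in Hcat by ring.
  unfold seg, edist in Hcat; cbn [fst snd] in Hcat.
  replace ((0 + s * (D - 0) - (D + (1 - s) * (0 - D))) ^ 2 + (0 + s * (0 - 0) - (0 + (1 - s) * (0 - 0))) ^ 2) with 0 in Hcat by ring.
  rewrite sqrt_0 in Hcat. apply Hzero. specialize (Hpos (c s) (c' s)). lra.
Qed.

Ltac endp := match goal with |- ?f ?x = ?g ?y =>
  first [ (replace x with 1 by lra; replace y with 0 by lra; congruence)
        | (replace x with 0 by lra; replace y with 1 by lra; congruence) ] end.

Definition NL {X : Type} (d : X -> X -> R) (U : X -> Prop) (a b c : X) : Prop :=
  exists c1 c2 c3, geodesic d a b c1 /\ geodesic d b c c2 /\ geodesic d c a c3 /\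
    nullhomotopic_in d U (tri_loop c1 c2 c3).

Lemma NL_rot {X} (d : X -> X -> R) U a b c : NL d U a b c -> NL d U b c a.
Proof.
  intros [c1 [c2 [c3 [G1 [G2 [G3 Hn]]]]]]. exists c2, c3, c1. split; auto. split; auto. split; auto.
  destruct (hnull_of d U _ Hn) as [H [CH [SH [TH [UH LH]]]]].
  destruct G1 as [A1 [B1 _]]. destruct G2 as [A2 [B2 _]]. destruct G3 as [A3 [B3 _]].
  exists (pws (2/3) (fun s t => H (s + 1/3) t) (fun s t => H (s - 2/3) t)).
  split; [|split; [|split]].
  - apply cont_csq. apply paste_s.
    + apply (comp_cont d _ (rect 0 1 0 1) H (fun s _ => s + 1/3) (fun _ t => t)); auto; [rsq|rlip_tac|rlip_tac].
    + apply (comp_cont d _ (rect 0 1 0 1) H (fun s _ => s - 2/3) (fun _ t => t)); auto; [rsq|rlip_tac|rlip_tac].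
    + intros t Ht. replace (2/3 + 1/3) with 1 by lra. replace (2/3 - 2/3) with 0 by lra.
      symmetry. apply SH; auto.
  - intros s t Hs Ht. unfold unit_I in *. unfold pws. destruct Rle_dec; apply UH; lra.
  - intros s Hs. unfold unit_I in *. unfold pws. split.
    + destruct Rle_dec; rewrite LH by lra; unfold tri_loop; repeat destruct Rle_dec; try lra;
        try congruence; try (f_equal; lra); endp.
    + unfold pws. destruct (Rle_dec 0 (2/3)); [|lra].
      destruct Rle_dec; (transitivity (H 0 1); [apply TH; lra | symmetry; apply TH; lra]).
  - intros t Ht. unfold unit_I in *. unfold pws. destruct Rle_dec; [|lra]. destruct Rle_dec; [lra|].
    f_equal; lra.
Qed.

Lemma NL_rev {X} (d : X -> X -> R) U a b c : (forall x y, d x y = d y x) -> NL d U a b c -> NL d U a c b.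
Proof.
  intros Hsym [c1 [c2 [c3 [G1 [G2 [G3 Hn]]]]]]. exists (rv c3), (rv c2), (rv c1).
  split; [apply rv_geo; auto|]. split; [apply rv_geo; auto|]. split; [apply rv_geo; auto|].
  destruct (hnull_of d U _ Hn) as [H [CH [SH [TH [UH LH]]]]].
  destruct G1 as [A1 [B1 _]]. destruct G2 as [A2 [B2 _]]. destruct G3 as [A3 [B3 _]].
  exists (fun s t => H (1 - s) t).
  split; [|split; [|split]].
  - apply cont_csq.
    apply (comp_cont d _ (rect 0 1 0 1) H (fun s _ => 1 - s) (fun _ t => t)); auto; [rsq|rlip_tac|rlip_tac].
  - intros s t Hs Ht. unfold unit_I in *. apply UH; lra.
  - intros s Hs. unfold unit_I in *. split.
    + rewrite LH by lra. unfold tri_loop, rv. repeat destruct Rle_dec; try lra;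
        try congruence; try (f_equal; lra); endp.
    + replace (1 - 0) with 1 by lra. rewrite TH by lra. rewrite <- SH by lra. auto.
  - intros t Ht. unfold unit_I in *. replace (1 - 0) with 1 by lra. replace (1 - 1) with 0 by lra.
    symmetry. apply SH; auto.
Qed.

Lemma tri_ext {X} (c1 c2 c3 c1' c2' c3' : R -> X) :
  (forall u, 0 <= u <= 1 -> c1 u = c1' u) -> (forall u, 0 <= u <= 1 -> c2 u = c2' u) ->
  (forall u, 0 <= u <= 1 -> c3 u = c3' u) ->
  forall s, 0 <= s <= 1 -> tri_loop c1 c2 c3 s = tri_loop c1' c2' c3' s.
Proof.
  intros E1 E2 E3 s Hs. unfold tri_loop. repeat destruct Rle_dec.
  - apply E1; lra. - apply E2; lra. - apply E3; lra.
Qed.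

Lemma geo_path {X} (d : X -> X -> R) p x y g :
  geodesic d x y g -> ~ geod_seg d x y p -> path_ok d (fun q => q <> p) g x y.
Proof.
  intros Gg Hn. split; [eapply geo_cont; eauto|]. pose proof Gg as Gg0.
  destruct Gg as [A [B _]]. split; [exact A|]. split; [exact B|].
  intros u Hu He. apply Hn. exists g. split; [exact Gg0|]. exists u. split; [unfold unit_I; lra | auto].
Qed.

Lemma core {X} (d : X -> X -> R) p a b c ap : CAT0 d ->
  (forall c1 c2 c3, geodesic d a b c1 -> geodesic d b c c2 -> geodesic d c a c3 ->
     ~ nullhomotopic_in d (fun q => q <> p) (tri_loop c1 c2 c3)) ->
  ~ Defs.triangle d a b c p ->
  ~ geod_seg d a ap p -> ~ geod_seg d b ap p -> ~ geod_seg d c ap p ->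
  NL d (fun q => q <> p) ap a b -> NL d (fun q => q <> p) ap b c -> NL d (fun q => q <> p) ap c a -> False.
Proof.
  intros Hcat Hall Hnt Sa Sb Sc N1 N2 N3.
  assert (Hsym : forall x y, d x y = d y x) by (destruct Hcat as [[_ [_ [Hs _]]] _]; auto).
  assert (Hgs : geodesic_space d) by (destruct Hcat as [_ [Hg _]]; auto).
  destruct (Hgs a ap) as [g1 G1]. destruct (Hgs b ap) as [g2 G2]. destruct (Hgs c ap) as [g3 G3].
  destruct (Hgs a b) as [m1 M1]. destruct (Hgs b c) as [m2 M2]. destruct (Hgs c a) as [m3 M3].
  set (U := fun q : X => q <> p).
  assert (Hn : forall x y z (g1 m g2 : R -> X), geodesic d x y g1 -> geodesic d x z m -> geodesic d z y g2 ->
            NL d U y x z -> exists H, hnull d U H (tri_loop (rv g1) m g2)).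
  { intros x y z h1 m h2 Gh1 Gm Gh2 [c1 [c2 [c3 [C1 [C2 [C3 Hnl]]]]]].
    apply hnull_of. eapply null_ext; [exact Hnl|].
    apply tri_ext; intros u Hu.
    - symmetry. eapply geo_uniq; eauto. apply rv_geo; auto.
    - symmetry. eapply geo_uniq; eauto.
    - symmetry. eapply geo_uniq; eauto. }
  destruct (Hn a ap b g1 m1 g2 G1 M1 G2 N1) as [H1 HH1].
  destruct (Hn b ap c g2 m2 g3 G2 M2 G3 N2) as [H2 HH2].
  destruct (Hn c ap a g3 m3 g1 G3 M3 G1 N3) as [H3 HH3].
  apply (Hall m1 m2 m3 M1 M2 M3).
  apply (big d U ap a b c g1 g2 g3 m1 m2 m3 H1 H2 H3); auto; apply geo_path; auto.
  - intro; apply Hnt; left; auto.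
  - intro; apply Hnt; right; left; auto.
  - intro; apply Hnt; right; right; auto.
Qed.

Lemma seg_sym {X} (d : X -> X -> R) x y q : (forall a b, d a b = d b a) ->
  geod_seg d x y q -> geod_seg d y x q.
Proof.
  intros Hs [c [Gc [t [Ht E]]]]. exists (rv c). split; [apply rv_geo; auto|].
  exists (1 - t). unfold unit_I in *. split; [lra|]. unfold rv. rewrite E. f_equal. ring.
Qed.

Lemma nt_segs {X} (d : X -> X -> R) x y z p : (forall a b, d a b = d b a) ->
  ~ Defs.triangle d x y z p ->
  ~ geod_seg d x y p /\ ~ geod_seg d y x p /\ ~ geod_seg d y z p /\ ~ geod_seg d z y p /\
  ~ geod_seg d z x p /\ ~ geod_seg d x z p.
Proof.
  intros Hs Hn. unfold Defs.triangle in Hn.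
  repeat split; intro Hq; apply Hn;
    first [left; exact Hq | right; left; exact Hq | right; right; exact Hq
          | left; apply seg_sym; [exact Hs | exact Hq] | right; left; apply seg_sym; [exact Hs | exact Hq] | right; right; apply seg_sym; [exact Hs | exact Hq]].
Qed.

Lemma NL_perm {X} (d : X -> X -> R) U a b c : (forall x y, d x y = d y x) -> NL d U a b c ->
  NL d U a b c /\ NL d U b c a /\ NL d U c a b /\ NL d U a c b /\ NL d U c b a /\ NL d U b a c.
Proof.
  intros Hs N. assert (N2 := NL_rot d U a b c N). assert (N3 := NL_rot d U b c a N2).
  repeat split; auto; apply NL_rev; auto.
Qed.

Lemma notfull {X} (d : X -> X -> R) x y z p : (forall a b, d a b = d b a) ->
  ~ full_triangle d x y z p ->
  (~ geod_seg d x y p /\ ~ geod_seg d y x p /\ ~ geod_seg d y z p /\ ~ geod_seg d z y p /\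
  ~ geod_seg d z x p /\ ~ geod_seg d x z p) /\
  (let U := fun q => q <> p in
  NL d U x y z /\ NL d U y z x /\ NL d U z x y /\ NL d U x z y /\ NL d U z y x /\ NL d U y x z).
Proof.
  intros Hs Hn. assert (Ht : ~ Defs.triangle d x y z p) by (intro; apply Hn; left; auto).
  split; [apply nt_segs; auto|]. intros U. apply NL_perm; auto.
  apply NNPP. intro HN. apply Hn. right. split; auto.
  intros c1 c2 c3 G1 G2 G3 Hnull. apply HN. exists c1, c2, c3. auto.
Qed.

Theorem claim6p1 (X I : Type) (d : X -> X -> R) (C : I -> pt -> Prop) (f : I -> pt -> X)
  (Hcx : euclidean_polygonal_complex d C f) (Hcat : CAT0 d)
  (x1 x2 x3 x4 p : X) (i : nat) :
  (1 <= i <= 4)%nat -> W d x1 x2 x3 x4 i p ->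
  exists j : nat, (1 <= j <= 4)%nat /\ j <> i /\ W d x1 x2 x3 x4 j p.
Proof.
  intros Hi HW.
  assert (Hsym : forall x y, d x y = d y x) by (destruct Hcat as [[_ [_ [Hs _]]] _]; auto).
  destruct (classic (exists j : nat, (1 <= j <= 4)%nat /\ j <> i /\ W d x1 x2 x3 x4 j p)) as [Hy|Hno];
    [exact Hy| exfalso].
  assert (NW : forall j, (1 <= j <= 4)%nat -> j <> i -> ~ W d x1 x2 x3 x4 j p)
    by (intros j Hj Hji HWj; apply Hno; exists j; auto).
  destruct i as [|[|[|[|[|i]]]]]; try lia.
  -
    pose proof (notfull d _ _ _ p Hsym (NW 2%nat ltac:(lia) ltac:(lia))) as [[? [? [? [? [? ?]]]]] [? [? [? [? [? ?]]]]]].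
    pose proof (notfull d _ _ _ p Hsym (NW 3%nat ltac:(lia) ltac:(lia))) as [[? [? [? [? [? ?]]]]] [? [? [? [? [? ?]]]]]].
    pose proof (notfull d _ _ _ p Hsym (NW 4%nat ltac:(lia) ltac:(lia))) as [[? [? [? [? [? ?]]]]] [? [? [? [? [? ?]]]]]].
    simpl in HW. destruct HW as [Ht | [Hnt Hall]].
    + unfold Defs.triangle in Ht. destruct Ht as [Hq|[Hq|Hq]]; tauto.
    + apply (core d p x2 x3 x4 x1 Hcat Hall Hnt); assumption.
  -
    pose proof (notfull d _ _ _ p Hsym (NW 1%nat ltac:(lia) ltac:(lia))) as [[? [? [? [? [? ?]]]]] [? [? [? [? [? ?]]]]]].
    pose proof (notfull d _ _ _ p Hsym (NW 3%nat ltac:(lia) ltac:(lia))) as [[? [? [? [? [? ?]]]]] [? [? [? [? [? ?]]]]]].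
    pose proof (notfull d _ _ _ p Hsym (NW 4%nat ltac:(lia) ltac:(lia))) as [[? [? [? [? [? ?]]]]] [? [? [? [? [? ?]]]]]].
    simpl in HW. destruct HW as [Ht | [Hnt Hall]].
    + unfold Defs.triangle in Ht. destruct Ht as [Hq|[Hq|Hq]]; tauto.
    + apply (core d p x1 x3 x4 x2 Hcat Hall Hnt); assumption.
  -
    pose proof (notfull d _ _ _ p Hsym (NW 1%nat ltac:(lia) ltac:(lia))) as [[? [? [? [? [? ?]]]]] [? [? [? [? [? ?]]]]]].
    pose proof (notfull d _ _ _ p Hsym (NW 2%nat ltac:(lia) ltac:(lia))) as [[? [? [? [? [? ?]]]]] [? [? [? [? [? ?]]]]]].
    pose proof (notfull d _ _ _ p Hsym (NW 4%nat ltac:(lia) ltac:(lia))) as [[? [? [? [? [? ?]]]]] [? [? [? [? [? ?]]]]]].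
    simpl in HW. destruct HW as [Ht | [Hnt Hall]].
    + unfold Defs.triangle in Ht. destruct Ht as [Hq|[Hq|Hq]]; tauto.
    + apply (core d p x1 x2 x4 x3 Hcat Hall Hnt); assumption.
  -
    pose proof (notfull d _ _ _ p Hsym (NW 1%nat ltac:(lia) ltac:(lia))) as [[? [? [? [? [? ?]]]]] [? [? [? [? [? ?]]]]]].
    pose proof (notfull d _ _ _ p Hsym (NW 2%nat ltac:(lia) ltac:(lia))) as [[? [? [? [? [? ?]]]]] [? [? [? [? [? ?]]]]]].
    pose proof (notfull d _ _ _ p Hsym (NW 3%nat ltac:(lia) ltac:(lia))) as [[? [? [? [? [? ?]]]]] [? [? [? [? [? ?]]]]]].
    simpl in HW. destruct HW as [Ht | [Hnt Hall]].
    + unfold Defs.triangle in Ht. destruct Ht as [Hq|[Hq|Hq]]; tauto.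
    + apply (core d p x1 x2 x3 x4 Hcat Hall Hnt); assumption.
Qed.
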